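(* Let $\Gamma$ be an edge-regular graph that has a regular clique, and suppose that $\Gamma$ is not strongly regular. Then $\Gamma$ has a regular clique of order at least $4$.
   Context: A graph is edge-regular if it is non-empty, $k$-regular for some $k$, and every two adjacent vertices have exactly $\lambda$ common neighbours for some constant $\lambda$. It is strongly regular if moreover every two distinct non-adjacent vertices have exactly $\mu$ common neighbours for some constant $\mu$. A clique $\mathcal C$ is regular if every vertex not in $\mathcal C$ is adjacent to the same number $e>0$ of vertices of $\mathcal C$. *)

(* Defs.v *)
From mathcomp Require Import all_boot.
Set Implicit Arguments. Unset Strict Implicit. Unset Printing Implicit Defensive.

Definition simple_graph (T : finType) (e : rel T) : Prop :=
  symmetric e /\ irreflexive e.

Definition nbhd (T : finType) (e : rel T) (x : T) : {set T} := [set y | e x y].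

Definition common_nb (T : finType) (e : rel T) (x y : T) : nat :=
  #|nbhd e x :&: nbhd e y|.

Definition k_regular (T : finType) (e : rel T) (k : nat) : Prop :=
  forall x : T, #|nbhd e x| = k.

Definition edge_regular (T : finType) (e : rel T) : Prop :=
  (exists x y : T, e x y) /\
  (exists k, k_regular e k) /\
  (exists lam, forall x y : T, e x y -> common_nb e x y = lam).

Definition strongly_regular (T : finType) (e : rel T) : Prop :=
  edge_regular e /\
  (exists mu, forall x y : T, x != y -> ~~ e x y -> common_nb e x y = mu).

Definition is_clique (T : finType) (e : rel T) (C : {set T}) : Prop :=
  forall x y, x \in C -> y \in C -> x != y -> e x y.

Definition regular_clique (T : finType) (e : rel T) (C : {set T}) : Prop :=
  is_clique e C /\
  exists2 m : nat, 0 < m &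
    forall x, x \notin C -> #|[set y in C | e x y]| = m.

(* Main.v *)
Require Import Defs.
From mathcomp Require Import all_boot.
From mathcomp Require Import zify.

Lemma inN (T : finType) (e : rel T) x y : (y \in nbhd e x) = e x y.
Proof. by rewrite /nbhd inE. Qed.

Lemma lemA (T : finType) (e : rel T) k lam x y :
  symmetric e -> irreflexive e -> k_regular e k ->
  (forall a b, e a b -> common_nb e a b = lam) -> e x y ->
  (forall w, w != x -> w != y -> e x w || e y w) ->
  forall u w, u != w -> ~~ e u w -> common_nb e u w = k.
Proof.
move=> sym irr reg hl exy cov.
have U: nbhd e x :|: nbhd e y = setT.
  apply/setP=> w; rewrite in_setU !inN in_setT.
  case: (eqVneq w x) => [->|wx]; first by rewrite (sym y x) exy orbT.
  case: (eqVneq w y) => [->|wy]; first by rewrite exy.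
  by rewrite cov.
have H1: #|T| + lam = k + k.
  by rewrite -(hl _ _ exy) /common_nb -cardsT -U cardsUI !reg.
move=> u w uw nuw.
have sub: nbhd e u \subset nbhd e w.
  apply/subsetP => t; rewrite !inN => ut; apply/negPn/negP => nwt.
  have ht := hl _ _ ut.
  have: nbhd e u :|: nbhd e t \subset [set~ w].
    apply/subsetP => s; rewrite in_setU !inN in_setC1.
    case: eqVneq => [->|//]; by rewrite (negbTE nuw) (sym t w) (negbTE nwt).
  move/subset_leq_card; rewrite cardsC1.
  have := cardsUI (nbhd e u) (nbhd e t); rewrite /common_nb in ht; rewrite ht !reg.
  have : 0 < #|T| by apply/card_gt0P; exists u.
  lia.
have eqN: nbhd e u :&: nbhd e w = nbhd e u by apply/setIidPl.
by rewrite /common_nb eqN reg.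
Qed.
Lemma lemGQ (T : finType) (e : rel T) k lam x y z :
  symmetric e -> irreflexive e -> k_regular e k ->
  (forall a b, e a b -> common_nb e a b = lam) ->
  e x y -> e y z -> e x z ->
  (forall w, w != x -> w != y -> w != z ->
     (e w x || e w y || e w z) /\ ~~ (e w x && e w y)) ->
  forall u w, u != w -> ~~ e u w -> common_nb e u w = k./2.
Proof.
move=> sym irr reg hl exy eyz exz hC.
have neq a b : e a b -> a != b.
  by move=> eab; apply: contraTneq eab => ->; rewrite irr.
have lam1 : lam = 1.
  have : nbhd e x :&: nbhd e y = [set z].
    apply/setP => w; rewrite in_setI !inN in_set1.
    case: (eqVneq w z) => [->|wz]; first by rewrite exz eyz.
    case: (eqVneq w x) => [->|wx]; first by rewrite irr.
    case: (eqVneq w y) => [->|wy]; first by rewrite irr andbF.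
    have [_ H] := hC w wx wy wz; rewrite (sym x w) (sym y w); exact/negbTE.
  by move=> H; rewrite -(hl x y exy) /common_nb H cards1.
have pairI a b c : e a b -> e a c -> e b c -> nbhd e a :&: nbhd e b = [set c].
  move=> eab eac ebc.
  have := hl a b eab; rewrite lam1 /common_nb => /eqP/cards1P [d hd].
  have : c \in nbhd e a :&: nbhd e b by rewrite in_setI !inN eac ebc.
  by rewrite hd in_set1 => /eqP ->.
have tricard a b c : e a b -> e a c -> e b c ->
    #|nbhd e a :|: nbhd e b :|: nbhd e c| + 3 = 3 * k.
  move=> eab eac ebc.
  have := cardsUI (nbhd e a) (nbhd e b); rewrite (pairI a b c) // cards1 !reg.
  have := cardsUI (nbhd e a :|: nbhd e b) (nbhd e c).
  rewrite setIUl (pairI a c b) // ?(sym c b) // (pairI b c a) ?(sym b a) ?(sym c a) //.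
  rewrite cards2 reg.
  have nab := neq _ _ eab; rewrite eq_sym in nab; rewrite nab. lia.
have cardT : #|T| + 3 = 3 * k.
  rewrite -(tricard x y z exy exz eyz) -cardsT; suff -> : nbhd e x :|: nbhd e y :|: nbhd e z = setT by [].  
    apply/setP => w; rewrite !in_setU !inN in_setT.
  case: (eqVneq w x) => [->|wx]; first by rewrite (sym y x) exy orbT.
  case: (eqVneq w y) => [->|wy]; first by rewrite exy.
  case: (eqVneq w z) => [->|wz]; first by rewrite exz.
  by have [H _] := hC w wx wy wz; rewrite (sym x w) (sym y w) (sym z w).
have cover a b c : e a b -> e a c -> e b c -> forall w, e a w || e b w || e c w.
  move=> eab eac ebc w.
  have : nbhd e a :|: nbhd e b :|: nbhd e c = setT.
    apply/eqP; rewrite eqEcard subsetT cardsT.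
    have := tricard a b c eab eac ebc; lia.
  by move/setP/(_ w); rewrite !in_setU !inN in_setT.
move=> u w uw nuw.
pose f t := odflt t [pick s in nbhd e u :&: nbhd e t].
have hf1 t : e u t -> f t \in nbhd e u :&: nbhd e t.
  move=> ut; rewrite /f; case: pickP => [s //|h].
  have := hl u t ut; rewrite lam1 /common_nb => /eqP/cards1P [c hc].
  by have := h c; rewrite hc in_set1 eqxx.
have hfu t s : e u t -> s \in nbhd e u :&: nbhd e t -> s = f t.
  move=> ut hs; have := hf1 t ut.
  have := hl u t ut; rewrite lam1 /common_nb => /eqP/cards1P [c hc].
  by move: hs; rewrite hc !in_set1 => /eqP -> /eqP ->.
have fu t : e u t -> e u (f t) by move=> ut; have := hf1 t ut; rewrite in_setI inN => /andP[].
have ft t : e u t -> e t (f t) by move=> ut; have := hf1 t ut; rewrite in_setI !inN => /andP[].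
have ff t : e u t -> f (f t) = t.
  move=> ut; apply/esym/hfu; first exact: fu.
  by rewrite in_setI !inN ut sym ft.
pose S := nbhd e u :&: nbhd e w.
have SN t : t \in S -> e u t by rewrite in_setI inN => /andP[].
have notboth t : e u t -> e w t -> e w (f t) -> False.
  move=> ut wt wft.
  have := hl t (f t) (ft t ut); rewrite lam1 /common_nb => /eqP/cards1P [c hc].
  have h1 : u \in nbhd e t :&: nbhd e (f t) by rewrite in_setI !inN sym ut sym fu.
  have h2 : w \in nbhd e t :&: nbhd e (f t) by rewrite in_setI !inN sym wt sym wft.
  move: h1 h2; rewrite hc !in_set1 => /eqP uc /eqP wc.
  by rewrite uc wc eqxx in uw.
have hN : nbhd e u = S :|: [set f t | t in S].
  apply/setP => t; rewrite in_setU inN; apply/idP/idP.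
    move=> ut; case tS: (t \in S); first by [].
    apply/orP; right; apply/imsetP; exists (f t); last by rewrite ff.
    have := cover u t (f t) ut (fu t ut) (ft t ut) w.
    rewrite (negbTE nuw) /= /S in_setI !inN (fu t ut) /=.
    move: tS; rewrite /S in_setI !inN ut /= => /negbT nwt.
    by rewrite (sym t w) (negbTE nwt) /= sym.
  case/orP => [/SN //|/imsetP [s sS ->]]; exact/fu/SN.
have card : #|[set f t | t in S]| = #|S|.
  apply: card_in_imset => a b ha hb fab.
  by rewrite -(ff a (SN a ha)) -(ff b (SN b hb)) fab.
have disj : S :&: [set f t | t in S] = set0.
  apply/setP => t; rewrite in_setI in_set0; apply/negbTE/negP => /andP [tS /imsetP [s sS def]].
  move: tS sS; rewrite def /S !in_setI !inN => /andP [_ wfs] /andP [us ws].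
  exact: (notboth s us ws wfs).
have := cardsUI S [set f t | t in S]; rewrite -hN disj cards0 card reg addn0.
by rewrite /common_nb -/S => ->; rewrite addnn doubleK.
Qed.

Theorem proposition5p2 (T : finType) (e : rel T) :
  simple_graph e ->
  edge_regular e ->
  (exists C : {set T}, regular_clique e C) ->
  ~ strongly_regular e ->
  exists C : {set T}, regular_clique e C /\ 4 <= #|C|.
Proof.
move=> [sym irr] er [C [clq [m m0 hm]]] nsr.
have [[a [b eab]] [[k reg] [lam hl]]] := er.
case: (leqP 4 #|C|) => [h|hlt]; first by exists C; split => //; split => //; exists m.
exfalso; apply: nsr; split => //.
have out w : w \notin C -> exists2 t, t \in C & e w t.
  move=> wC; have := hm w wC; move: m0 => /[swap] <- /card_gt0P [t].
  by rewrite inE => /andP[tC wt]; exists t.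
have : #|C| = 0 \/ #|C| = 1 \/ #|C| = 2 \/ #|C| = 3 by lia.
case=> [/cards0_eq C0|[/eqP/cards1P [x Cx]|[/eqP/cards2P [x [y [xy Cxy]]]|C3]]].
- have [t] := out a ltac:(by rewrite C0 in_set0); by rewrite C0 in_set0.
- have [y exy] : exists y, e x y.
    case: (eqVneq a x) => [<-|ax]; first by exists b.
    have [t] := out a ltac:(by rewrite Cx in_set1).
    by rewrite Cx in_set1 => /eqP -> eat; exists a; rewrite sym.
  exists k; apply: (@lemA _ e k lam x y sym irr reg hl exy) => w wx _.
  have [t] := out w ltac:(by rewrite Cx in_set1).
  by rewrite Cx in_set1 => /eqP -> ewt; rewrite sym ewt.
- have exy : e x y by apply: clq => //; rewrite Cxy !inE eqxx ?orbT.
  exists k; apply: (@lemA _ e k lam x y sym irr reg hl exy) => w wx wy.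
  have [t] := out w ltac:(by rewrite Cxy !inE negb_or wx wy).
  rewrite Cxy !inE => /orP [] /eqP -> ewt; by rewrite (sym x w) (sym y w) ewt ?orbT.
- have [x xC] : exists x, x \in C by apply/card_gt0P; rewrite C3.
  have C2 : #|C :\ x| == 2 by apply/eqP; have := cardsD1 x C; rewrite xC C3; lia.
  have /cards2P [y [z [yz def]]] := C2.
  have memC t : (t \in C) = [|| t == x, t == y | t == z].
    case: (eqVneq t x) => [->//|tx].
    have <- : (t \in C :\ x) = (t \in C) by rewrite in_setD1 tx.
    by rewrite def !inE.
  have yC : y \in C by rewrite memC eqxx ?orbT.
  have zC : z \in C by rewrite memC eqxx ?orbT.
  have yx : y != x by have := in_setD1 y C x; rewrite def !inE eqxx yC andbT /= => /esym.
  have zx : z != x by have := in_setD1 z C x; rewrite def !inE eqxx zC orbT andbT /= => /esym.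
  have exy : e x y by apply: clq => //; rewrite eq_sym.
  have exz : e x z by apply: clq => //; rewrite eq_sym.
  have eyz : e y z by apply: clq.
  have wC w : w != x -> w != y -> w != z -> w \notin C.
    by move=> wx wy wz; rewrite memC negb_or wx negb_or wy wz.
  case: (eqVneq m 1) => [m1|m1].
  + exists k./2; apply: (@lemGQ _ e k lam x y z sym irr reg hl exy eyz exz) => w wx wy wz.
    have wnC := wC w wx wy wz.
    split.
      have [t] := out w wnC.
      by rewrite memC => /or3P [] /eqP -> ->; rewrite ?orbT.
    apply/negP => /andP [wx' wy'].
    have := hm w wnC; rewrite m1 => hc.
    have : [set x; y] \subset [set t in C | e w t].
      by apply/subsetP => t; rewrite !inE => /orP [] /eqP ->; rewrite ?xC ?yC ?wx' ?wy'.
    move/subset_leq_card; rewrite hc cards2 eq_sym yx.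
    by [].
  + exists k; apply: (@lemA _ e k lam x y sym irr reg hl exy) => w wx wy.
    case: (eqVneq w z) => [->|wz]; first by rewrite exz.
    have wnC := wC w wx wy wz.
    apply/negPn/negP; rewrite negb_or => /andP [nx ny].
    have : [set t in C | e w t] \subset [set z].
      apply/subsetP => t; rewrite !inE memC => /andP [/or3P [] /eqP -> h] //.
      by rewrite sym h in nx.
      by rewrite sym h in ny.
    move/subset_leq_card; rewrite hm // cards1.
    move=> hle; have m1e : m = 1 by apply/eqP; rewrite eqn_leq hle m0.
    by rewrite m1e eqxx in m1.
Qed.
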